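(* Let $(X,Y,G)$ be random with $X\in\mathcal{X}$, $Y\in\{0,1\}$, $G\in\{a,b\}$, $\Pr[G=g]>0$ and $0<p_g<1$ for $g\in\{a,b\}$, where $p_g:=\Pr[Y=1\mid G=g]$, and assume $p_a\neq p_b$. Let $\Phi:\mathcal{X}\to\mathcal{Z}$ be a measurable encoder and $k_{\mathcal{Z}}$ a positive-definite kernel on $\mathcal{Z}$ with RKHS $\mathcal{H}_{\mathcal{Z}}$ and measurable feature map $\phi_{\mathcal{Z}}$, such that the Bochner expectations $\mu_{\Phi,g}:=\mathbb{E}[\phi_{\mathcal{Z}}(\Phi(X))\mid G=g]$ and $\mu_{\Phi,y,g}:=\mathbb{E}[\phi_{\mathcal{Z}}(\Phi(X))\mid Y=y,G=g]$ exist. Suppose that for some $\varepsilon,\rho\ge0$, \[\|\mu_{\Phi,a}-\mu_{\Phi,b}\|_{\mathcal{H}_{\mathcal{Z}}}\le\varepsilon\quad\text{and}\quad\|\mu_{\Phi,y,a}-\mu_{\Phi,y,b}\|_{\mathcal{H}_{\mathcal{Z}}}\le\rho\ \text{ for } y\in\{0,1\}.\] Then \[\|\mu_{\Phi,1,a}-\mu_{\Phi,0,a}\|_{\mathcal{H}_{\mathcal{Z}}}\le\frac{\varepsilon+\rho}{|p_a-p_b|}\quad\text{and}\quad\|\mu_{\Phi,1,b}-\mu_{\Phi,0,b}\|_{\mathcal{H}_{\mathcal{Z}}}\le\frac{\varepsilon+\rho}{|p_a-p_b|}.\]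
   Context: $\varepsilon$ measures approximate distributional parity of the representation $\Phi(X)$ across groups and $\rho$ measures approximate class-conditional separation in representation space. *)

(* Defs.v *)
From HB Require Import structures.
From mathcomp Require Import all_boot all_order all_algebra.
From mathcomp Require Import all_classical all_reals all_analysis.
Set Implicit Arguments. Unset Strict Implicit. Unset Printing Implicit Defensive.
Import Order.TTheory GRing.Theory Num.Theory.
Import numFieldNormedType.Exports.
Local Open Scope classical_set_scope.
Local Open Scope ring_scope.

(* A real inner product on a normed space whose norm is induced by it.
   Together with completeness of the carrier, this makes H a real
   Hilbert space (the RKHS H_Z). *)
Record inner_product (R : realType) (H : normedModType R) := InnerProduct {
  ip : H -> H -> R ;
  ip_sym : forall u v, ip u v = ip v u ;
  ip_linear : forall (a : R) (u v w : H), ip (a *: u + v) w = a * ip u w + ip v w ;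
  ip_norm : forall u, ip u u = `|u| ^+ 2 }.

Definition feature_kernel (R : realType) (H : normedModType R)
  (ipH : inner_product H) (Z : Type) (phi : Z -> H) : Z -> Z -> R :=
  fun z z' => ip ipH (phi z) (phi z').

Definition cond_prob (R : realType) (d : measure_display) (T : measurableType d)
  (P : probability T R) (A B : set T) : R :=
  fine (P (A `&` B)) / fine (P B).

Definition pY1 (R : realType) (d : measure_display) (T : measurableType d)
  (P : probability T R) (Y G : T -> bool) (g : bool) : R :=
  cond_prob P [set w | Y w = true] [set w | G w = g].

(* m is the (Bochner) conditional expectation E[F | E] of the H-valued
   random element F given the event E (with P E > 0):  F is (weakly)
   measurable on E with integrable norm, and m is characterised by
   <h, m> = E[<h, F> | E] for every h in H (which determines the Bochner
   integral uniquely in a Hilbert space). *)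
Definition bochner_cond_mean (R : realType) (d : measure_display)
  (T : measurableType d) (P : probability T R) (H : normedModType R)
  (ipH : inner_product H) (E : set T) (F : T -> H) (m : H) : Prop :=
  [/\ measurable E, (0 < P E)%E,
      measurable_fun E (fun w => `|F w|),
      P.-integrable E (fun w => (`|F w|)%:E) &
      forall h : H,
        measurable_fun E (fun w => ip ipH h (F w)) /\
        ip ipH h m = fine (\int[P]_(w in E) (ip ipH h (F w))%:E) / fine (P E)].

(* Main.v *)
Require Import Defs.
From HB Require Import structures.
From mathcomp Require Import all_boot all_order all_algebra.
From mathcomp Require Import all_classical all_reals all_analysis.
From mathcomp Require Import ring lra measurable_realfun.
Import Order.TTheory GRing.Theory Num.Theory.
Import numFieldNormedType.Exports.
Local Open Scope classical_set_scope.
Local Open Scope ring_scope.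


Section IP.
Variables (R : realType) (H : normedModType R) (ipH : inner_product H).
Local Notation ip := (ip ipH).

Lemma ip0l w : ip 0 w = 0.
Proof.
have := ip_linear ipH 1 0 0 w; rewrite scale1r addr0 mul1r.
by move=> /(congr1 (fun t => t - ip 0 w)); rewrite subrr addrK.
Qed.

Lemma ipZl a u w : ip (a *: u) w = a * ip u w.
Proof. by have := ip_linear ipH a u 0 w; rewrite addr0 ip0l addr0. Qed.

Lemma ipDl u v w : ip (u + v) w = ip u w + ip v w.
Proof. by have := ip_linear ipH 1 u v w; rewrite scale1r mul1r. Qed.

Lemma ipZr a u w : ip w (a *: u) = a * ip w u.
Proof. by rewrite ip_sym ipZl ip_sym. Qed.

Lemma ipDr u v w : ip w (u + v) = ip w u + ip w v.
Proof. by rewrite ip_sym ipDl !(ip_sym _ w). Qed.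

Lemma ipNr u w : ip w (- u) = - ip w u.
Proof. by rewrite -scaleN1r ipZr mulN1r. Qed.

Lemma ip_eq0 x : (forall h, ip h x = 0) -> x = 0.
Proof.
move=> h; have := h x; rewrite ip_norm => /eqP.
by rewrite sqrf_eq0 normr_eq0 => /eqP.
Qed.

Lemma ip_CS u v : `|ip u v| <= `|u| * `|v|.
Proof.
have [->|u0] := eqVneq u 0; first by rewrite ip0l normr0 normr0 mul0r.
have nu : 0 < `|u| by rewrite normr_gt0.
set a := `|v| / `|u|.
have key : forall s : R, s * s = 1 -> 0 <= a ^+ 2 * `|u| ^+ 2 + 2 * s * a * ip u v + `|v| ^+ 2.
  move=> s ss.
  have := ip_norm ipH (a *: u + s *: v).
  rewrite !ipDl !ipDr !ipZl !ipZr !ip_norm (ip_sym _ v u) => E.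
  have : 0 <= `|a *: u + s *: v| ^+ 2 by rewrite sqr_ge0.
  rewrite -E => P0.
  have -> : a ^+ 2 * `|u| ^+ 2 + 2 * s * a * ip u v + `|v| ^+ 2 =
   a * (a * `|u| ^+ 2) + a * (s * ip u v) +
  (s * (a * ip u v) + s * (s * `|v| ^+ 2)).
    by rewrite (mulrA s s) ss; ring.
  exact: P0.
have ha : a * `|u| = `|v| by rewrite /a divfK // gt_eqF.
have a0 : 0 <= a by rewrite /a divr_ge0.
have k1 := key 1 (mulr1 1).
have k2 := key (-1) (etrans (mulrNN 1 1) (mulr1 1)).
have e : a ^+ 2 * `|u| ^+ 2 = `|v| ^+ 2 by rewrite -exprMn ha.
rewrite e in k1 k2.
have [av|av] := eqVneq a 0.
  move: ha; rewrite av mul0r => /esym /eqP; rewrite normr_eq0 => /eqP ->.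
  by rewrite ip_sym ip0l normr0 normr0 mulr0.
have apos : 0 < a by rewrite lt_neqAle eq_sym av a0.
rewrite -(ler_pM2l apos) mulrA (mulrC a) ha -{1}(ger0_norm a0) -normrM ler_norml.
rewrite -expr2; apply/andP; split; nra.
Qed.
End IP.

Section Decomp.
Variables (R : realType) (d : measure_display) (T : measurableType d)
  (P : probability T R) (H : normedModType R) (ipH : inner_product H).

Lemma fineP_gt0 (S : set T) : measurable S -> (0 < P S)%E -> 0 < fine (P S).
Proof.
move=> mS PS; apply: fine_gt0; rewrite PS /=.
exact: (le_lt_trans (probability_le1 P mS) (ltry 1)).
Qed.

Lemma ip_integrable (h : H) (F : T -> H) (S : set T) : measurable S ->
  measurable_fun S (fun w => ip ipH h (F w)) ->
  P.-integrable S (fun w => (`|F w|)%:E) ->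
  P.-integrable S (fun w => (ip ipH h (F w))%:E).
Proof.
move=> mS mf int.
apply: (le_integrable mS _ _ (integrableZl mS `|h| int)).
  exact/measurable_EFinP.
move=> x _; rewrite -EFinM !abse_EFin lee_fin normrM normr_id.
by rewrite normr_id; exact: ip_CS.
Qed.

Arguments ip_integrable {h F S}.
Arguments fineP_gt0 {S}.

Lemma decomp (E1 E0 : set T) (F : T -> H) m m1 m0 :
  E1 `&` E0 = set0 ->
  bochner_cond_mean P ipH (E1 `|` E0) F m ->
  bochner_cond_mean P ipH E1 F m1 ->
  bochner_cond_mean P ipH E0 F m0 ->
  m = (fine (P E1) / fine (P (E1 `|` E0))) *: m1 +
      (fine (P E0) / fine (P (E1 `|` E0))) *: m0.
Proof.
move=> dis [mE PE mnE intE hE] [mE1 PE1 mn1 int1 h1] [mE0 PE0 mn0 int0 h0].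
apply/subr0_eq/(@ip_eq0 _ _ ipH) => h.
rewrite ipDr ipNr ipDr !ipZr.
case: (hE h) => mhE ->; case: (h1 h) => mh1 ->; case: (h0 h) => mh0 ->.
have -> : (\int[P]_(x in E1 `|` E0) (ip ipH h (F x))%:E =
    \int[P]_(x in E1) (ip ipH h (F x))%:E + \int[P]_(x in E0) (ip ipH h (F x))%:E)%E.
  by rewrite integral_setU //; first (by exact/measurable_EFinP); exact/eqP.
have f1 := integrable_fin_num mE1 (ip_integrable mE1 mh1 int1).
have f0 := integrable_fin_num mE0 (ip_integrable mE0 mh0 int0).
rewrite fineD //.
have := fineP_gt0 mE PE; have := fineP_gt0 mE1 PE1; have := fineP_gt0 mE0 PE0.
move: (fine (P E1)) (fine (P E0)) (fine (P (E1 `|` E0))) => a b c ha hb hc.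
field.
by rewrite !gt_eqF.
Qed.
End Decomp.

Section Alg.
Variables (R : realType) (H : normedModType R) (ipH : inner_product H).

Lemma side (p c eps rho : R) (D A B m1a m1b m0a m0b : H) :
  c *: D = (A - B) - p *: (m1a - m1b) - (1 - p) *: (m0a - m0b) ->
  0 <= p <= 1 -> c != 0 ->
  `|A - B| <= eps -> `|m1a - m1b| <= rho -> `|m0a - m0b| <= rho ->
  `|D| <= (eps + rho) / `|c|.
Proof.
move=> E /andP[p0 p1] c0 hA h1 h0.
rewrite ler_pdivlMr ?normr_gt0 // mulrC -normrZ E.
apply: (le_trans (ler_normB _ _)); apply: (le_trans (lerD (ler_normB _ _) (lexx _))).
rewrite !normrZ (ger0_norm p0) (@ger0_norm _ (1 - p)) ?subr_ge0 //.
have : p * `|m1a - m1b| <= p * rho by rewrite ler_wpM2l.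
have : (1 - p) * `|m0a - m0b| <= (1 - p) * rho by rewrite ler_wpM2l // subr_ge0.
move: hA; nra.
Qed.

Arguments side {p c eps rho D A B m1a m1b m0a m0b}.

Lemma final (pa pb eps rho : R) (A B m1a m1b m0a m0b : H) :
  A = pa *: m1a + (1 - pa) *: m0a -> B = pb *: m1b + (1 - pb) *: m0b ->
  0 <= pa <= 1 -> 0 <= pb <= 1 -> pa != pb ->
  `|A - B| <= eps -> `|m1a - m1b| <= rho -> `|m0a - m0b| <= rho ->
  `|m1a - m0a| <= (eps + rho) / `|pa - pb| /\
  `|m1b - m0b| <= (eps + rho) / `|pa - pb|.
Proof.
move=> EA EB pa01 pb01 nab hA h1 h0.
have c0 : pa - pb != 0 by rewrite subr_eq0.
split.
- apply: (side _ pb01 c0 hA h1 h0).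
  apply/subr0_eq/(@ip_eq0 _ _ ipH) => h.
  rewrite EA EB !(ipDr, ipNr, ipZr); ring.
- apply: (side _ pa01 c0 hA h1 h0).
  apply/subr0_eq/(@ip_eq0 _ _ ipH) => h.
  rewrite EA EB !(ipDr, ipNr, ipZr); ring.
Qed.
End Alg.
Arguments decomp {R d T P H ipH E1 E0 F m m1 m0}.
(* Groups: a := true, b := false.  Labels: Y = 1 is true, Y = 0 is false. *)
Theorem theorem6 (R : realType)
  (d : measure_display) (Omega : measurableType d) (P : probability Omega R)
  (dX : measure_display) (Xs : measurableType dX)
  (dZ : measure_display) (Zs : measurableType dZ)
  (X : Omega -> Xs) (Y G : Omega -> bool)
  (H : completeNormedModType R) (ipH : inner_product H)
  (Phi : Xs -> Zs) (phiZ : Zs -> H)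
  (muG : bool -> H) (muYG : bool -> bool -> H) (eps rho : R) :
  measurable_fun setT X ->
  (forall y : bool, measurable (Y @^-1` [set y])) ->
  (forall g : bool, measurable (G @^-1` [set g])) ->
  (forall g : bool, (0 < P [set w | G w = g])%E) ->
  (forall g : bool, 0 < pY1 P Y G g < 1) ->
  pY1 P Y G true != pY1 P Y G false ->
  measurable_fun setT Phi ->
  (forall h : H, measurable_fun setT (fun z => ip ipH h (phiZ z))) ->
  measurable_fun setT (fun z => `|phiZ z|) ->
  (forall g : bool, bochner_cond_mean P ipH [set w | G w = g]
                      (fun w => phiZ (Phi (X w))) (muG g)) ->
  (forall y g : bool, bochner_cond_mean P ipH [set w | Y w = y /\ G w = g]
                      (fun w => phiZ (Phi (X w))) (muYG y g)) ->
  0 <= eps -> 0 <= rho ->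
  `|muG true - muG false| <= eps ->
  (forall y : bool, `|muYG y true - muYG y false| <= rho) ->
  `|muYG true true - muYG false true|
     <= (eps + rho) / `|pY1 P Y G true - pY1 P Y G false| /\
  `|muYG true false - muYG false false|
     <= (eps + rho) / `|pY1 P Y G true - pY1 P Y G false|.
Proof.
move=> mX mY mG PG p01 pne mPhi mphi mnphi HG HYG eps0 rho0 hmu hrho.
have dec : forall g, muG g = pY1 P Y G g *: muYG true g + (1 - pY1 P Y G g) *: muYG false g.
  move=> g.
  set E1 := [set w | Y w = true /\ G w = g].
  set E0 := [set w | Y w = false /\ G w = g].
  have U : [set w | G w = g] = E1 `|` E0.
    apply/seteqP; split => w; rewrite /E1 /E0; cbv beta; first by move=> Gw; case Yw: (Y w); [left|right]; split.
    by case=> -[].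
  have I : E1 `&` E0 = set0.
    by apply/seteqP; split => w // [] [h1 _] [h2 _]; rewrite h1 in h2.
  have hG := HG g; rewrite U in hG.
  have [mE1 _ _ _ _] := HYG true g.
  have [mE0 _ _ _ _] := HYG false g.
  rewrite (decomp I hG (HYG true g) (HYG false g)) -U.
  have fin : forall S, measurable S -> P S \is a fin_num.
    move=> S mS; rewrite ge0_fin_numE //.
    exact: (le_lt_trans (probability_le1 P mS) (ltry 1)).
  have PGpos : 0 < fine (P [set w | G w = g]) by apply: fineP_gt0; [rewrite U; exact: measurableU|exact: PG].
  have e0 : fine (P E0) = fine (P [set w | G w = g]) - fine (P E1).
    rewrite U measureU // fineD ?fin //; ring.
  congr (_ *: _ + _ *: _).
  rewrite e0 /pY1 /cond_prob; field; exact: lt0r_neq0.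
move: (p01 true) (p01 false) => /andP[a0 a1] /andP[b0 b1].
apply: (@final R H ipH _ _ _ _ _ _ _ _ _ _ (dec true) (dec false)) => //.
- by rewrite ltW // ltW.
- by rewrite ltW // ltW.
Qed.
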